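(* Let $q\geq 0$ and $n\geq 0$. Carole can win (i.e. Paul has no winning strategy in) the $q$-round pathological liar game with $1$ lie and initial state $(n,0)$ provided $$2^q>\begin{cases} n(q+1) & \text{if $n$ is even},\\ n(q+1)-(q-1) & \text{if $n$ is odd}.\end{cases}$$
   Context: Pathological liar game with $1$ lie: a state is a pair $(x_0,x_1)$ of nonnegative integers. In each of $q$ rounds Paul chooses a legal question $(a_0,a_1)$ with integers $0\leq a_i\leq x_i$, and Carole answers Y or N; the new state is $(a_0,\,a_1+x_0-a_0)$ after Y, or $(x_0-a_0,\,x_1-a_1+a_0)$ after N. Paul wins iff after $q$ rounds $x_0+x_1\geq 1$; otherwise Carole wins. *)

(* Defs.v *)
From Stdlib Require Import Arith ZArith Lia.

Fixpoint paul_wins (q : nat) (x0 x1 : nat) : Prop :=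
  match q with
  | O => 1 <= x0 + x1
  | S q' => exists a0 a1, a0 <= x0 /\ a1 <= x1 /\
              paul_wins q' a0 (a1 + (x0 - a0)) /\
              paul_wins q' (x0 - a0) (x1 - a1 + a0)
  end.

(* Main.v *)
Require Import Defs.
From Stdlib Require Import Arith ZArith Lia.

Lemma L (q : nat) : forall x0 x1, x0 * (q + 1) + x1 < 2 ^ q -> ~ paul_wins q x0 x1.
Proof.
  induction q as [|q IH]; simpl; intros x0 x1 H.
  - lia.
  - intros (a0 & a1 & h1 & h2 & hY & hN).
    destruct (Nat.sub_add a0 x0 h1) as [].
    destruct (Nat.sub_add a1 x1 h2) as [].
    set (b := x0 - a0) in *. set (c := x1 - a1) in *.
    replace x0 with (b + a0) in H by lia. replace x1 with (c + a1) in H by lia.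
    assert (a0 * (q + 1) + (a1 + b) < 2 ^ q \/ b * (q + 1) + (c + a0) < 2 ^ q) as [Hl|Hl] by nia.
    + exact (IH _ _ Hl hY).
    + exact (IH _ _ Hl hN).
Qed.

Theorem lemma11 (q n : nat) :
  (if Nat.even n
   then (Z.of_nat n * (Z.of_nat q + 1) < 2 ^ Z.of_nat q)%Z
   else (Z.of_nat n * (Z.of_nat q + 1) - (Z.of_nat q - 1) < 2 ^ Z.of_nat q)%Z) ->
  ~ paul_wins q n 0.
Proof.
  assert (Hp : Z.of_nat (2 ^ q) = (2 ^ Z.of_nat q)%Z) by (rewrite Nat2Z.inj_pow; reflexivity).
  rewrite <- Hp.
  destruct (Nat.even n) eqn:He; intro H.
  - apply L. lia.
  - destruct q as [|q].
    + simpl in H. lia.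
    + simpl. intros (a0 & a1 & h1 & h2 & hY & hN).
      assert (a1 = 0) by lia. subst a1.
      assert (Hodd : Nat.odd n = true) by (rewrite <- Nat.negb_even, He; reflexivity).
      apply Nat.odd_spec in Hodd. destruct Hodd as [k Hk].
      rewrite Nat.pow_succ_r' in H.
      destruct (Nat.sub_add a0 n h1) as [].
      set (b := n - a0) in *.
      assert (a0 <> b) by lia.
      destruct (Nat.lt_gt_cases a0 b) as [[Hl|Hl] _]; [exact H0|..].
      * apply (L q _ _ (ltac:(nia) : a0 * (q + 1) + (0 + b) < 2 ^ q) hY).
      * apply (L q _ _ (ltac:(nia) : b * (q + 1) + (0 - 0 + a0) < 2 ^ q) hN).
Qed.
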